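(* Let $G$ be a finite simple graph with $n$ vertices. Then there exists a sequence of distinct vertices $v_1,\dots,v_n$ of $G$ with the following property. Define $G_0:=G$ and $G_k:=G_{k-1}-v_k$ (the graph obtained by deleting the vertex $v_k$ and its incident edges) for $1\le k\le n$. Then $\nu(G_k)=\nu(G)-k$ for all $k<\nu(G)$, and $\nu(G_k)=0$ for all $k\ge \nu(G)$.
   Context: For a finite simple graph $G$ with vertex set $\{v_1,\dots,v_n\}$, the closed adjacency matrix $N(G)$ is the $n\times n$ matrix over $\mathbb{Z}_2$ whose $(i,j)$ entry is $1$ iff $i=j$ or $v_i$ is adjacent to $v_j$. The nullity of $G$ is $\nu(G):=\dim \operatorname{Ker}(N(G))$ over $\mathbb{Z}_2$. By convention, the graph with no vertices $K_0$ has $\nu(K_0)=0$. *)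

(* Defs.v *)
From HB Require Import structures.
From mathcomp Require Import all_boot all_order all_algebra.
Set Implicit Arguments. Unset Strict Implicit. Unset Printing Implicit Defensive.
Import GRing.Theory.
Local Open Scope ring_scope.

Definition simple_graph (T : finType) (e : rel T) : Prop :=
  symmetric e /\ irreflexive e.

(* Closed adjacency matrix over Z_2 of the induced subgraph G[S]
   (vertices of S enumerated via enum_val). *)
Definition closed_adj (T : finType) (e : rel T) (S : {set T}) : 'M['F_2]_#|S| :=
  \matrix_(i, j) (if (i == j) || e (enum_val i) (enum_val j) then 1 else 0).

Definition nullity (T : finType) (e : rel T) (S : {set T}) : nat :=
  \rank (kermx (closed_adj e S)).

Definition remaining (T : finType) (s : seq T) (k : nat) : {set T} :=
  [set x | x \notin take k s].

(* Main.v *)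
Require Import Defs.
From mathcomp Require Import all_boot all_order all_algebra.
Set Implicit Arguments. Unset Strict Implicit. Unset Printing Implicit Defensive.
Import GRing.Theory.
From mathcomp Require Import zify ring.
Local Open Scope ring_scope.

Lemma F2_cases (x : 'F_2) : x = 0 \/ x = 1.
Proof. case: x => [[|[|m]] Hm]; [left|right|]; try exact: val_inj. by []. Qed.

Lemma F2_neq0 (x : 'F_2) : x != 0 -> x = 1.
Proof. by case: (F2_cases x) => ->. Qed.

Lemma F2_add_self (x : 'F_2) : x + x = 0.
Proof. by case: (F2_cases x) => ->; [rewrite addr0 | apply: val_inj]. Qed.

Lemma F2_mul_self (x : 'F_2) : x * x = x.
Proof. by case: (F2_cases x) => ->; rewrite ?mulr0 ?mulr1. Qed.

Definition Dm n (S : {set 'I_n}) : 'M['F_2]_n :=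
  diag_mx (\row_i (if i \in S then 1 else 0)).

Lemma DmE n (S : {set 'I_n}) i j :
  Dm S i j = if (i \in S) && (i == j) then 1 else 0.
Proof. by rewrite /Dm mxE mxE; case: (i \in S); case: (i == j). Qed.

Lemma Dm_tr n (S : {set 'I_n}) : (Dm S)^T = Dm S.
Proof. exact: tr_diag_mx. Qed.

Lemma DmM n (S S' : {set 'I_n}) : Dm S *m Dm S' = Dm (S :&: S').
Proof.
apply/matrixP=> i j; rewrite /Dm mul_diag_mx !mxE inE.
by case: (i \in S); case: (i \in S'); case: (i == j); rewrite ?mulr1 ?mulr0 ?mul0r.
Qed.

Lemma DmMl n (S : {set 'I_n}) m (M : 'M['F_2]_(n, m)) i j :
  (Dm S *m M) i j = if i \in S then M i j else 0.
Proof. by rewrite /Dm mul_diag_mx !mxE; case: (i \in S); rewrite ?mul1r ?mul0r. Qed.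

Lemma DmMr n (S : {set 'I_n}) m (M : 'M['F_2]_(m, n)) i j :
  (M *m Dm S) i j = if j \in S then M i j else 0.
Proof. by rewrite /Dm mul_mx_diag !mxE; case: (j \in S); rewrite ?mulr1 ?mulr0. Qed.

Section Padding.
Variables (U : finType) (n : nat) (g : 'I_n -> U) (h : U -> 'I_n).
Hypotheses (gK : cancel h g) (g_inj : injective g).
Variable S : {set U}.

Definition Pm : 'M['F_2]_(#|S|, n) :=
  \matrix_(k, i) (if enum_val k == g i then 1 else 0).

Definition Sp : {set 'I_n} := [set i | g i \in S].

Lemma hK : cancel g h.
Proof. by move=> i; apply: g_inj; rewrite gK. Qed.

Lemma sumP k (f : 'I_n -> 'F_2) : \sum_i Pm k i * f i = f (h (enum_val k)).
Proof.
rewrite (bigD1 (h (enum_val k))) //= big1 ?addr0.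
  by rewrite mxE gK eqxx mul1r.
move=> i Hi; rewrite mxE; case: eqP => [E|_]; last by rewrite mul0r.
by move: Hi; rewrite E hK eqxx.
Qed.

Lemma PPt : Pm *m Pm^T = 1.
Proof.
apply/matrixP=> k l; rewrite [LHS]mxE [RHS]mxE.
rewrite (eq_bigr (fun i => Pm k i * Pm l i)); last by move=> i _; rewrite [Pm^T _ _]mxE.
rewrite sumP mxE gK (inj_eq enum_val_inj).
by rewrite eq_sym; case: (k == l).
Qed.

Lemma PtP : Pm^T *m Pm = Dm Sp.
Proof.
apply/matrixP=> i j; rewrite DmE !mxE inE.
under eq_bigr => k _ do rewrite !mxE.
case: (boolP (g i \in S)) => Hi /=.
  rewrite (bigD1 (enum_rank_in Hi (g i))) //= big1 ?addr0.
    rewrite enum_rankK_in // eqxx mul1r (inj_eq g_inj).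
    by case: (i == j).
  move=> k Hk; case: eqP => [E|_]; last by rewrite mul0r.
  have := enum_valK_in Hi k; rewrite E => Ek.
  by move: Hk; rewrite -{1}Ek eqxx.
rewrite big1 // => k _; case: eqP => [E|_]; last by rewrite mul0r.
by move: Hi; rewrite -E enum_valP.
Qed.

Lemma PD : Pm *m Dm Sp = Pm.
Proof. by rewrite -PtP mulmxA PPt mul1mx. Qed.

Lemma rank_pad (M : 'M['F_2]_n) :
  \rank (Pm *m M *m Pm^T) = \rank (Dm Sp *m M *m Dm Sp).
Proof.
apply/eqP; rewrite eqn_leq; apply/andP; split.
  have -> : Pm *m M *m Pm^T = Pm *m (Dm Sp *m M *m Dm Sp) *m Pm^T.
    have DPt : Dm Sp *m Pm^T = Pm^T by rewrite -[Dm Sp]Dm_tr -trmx_mul PD.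
    by rewrite !mulmxA PD -(mulmxA _ (Dm Sp)) DPt.
  by rewrite (leq_trans (mxrankM_maxl _ _)) // mxrankM_maxr.
have -> : Dm Sp *m M *m Dm Sp = Pm^T *m (Pm *m M *m Pm^T) *m Pm.
  by rewrite -PtP !mulmxA.
by rewrite (leq_trans (mxrankM_maxl _ _)) // mxrankM_maxr.
Qed.

Lemma rank_Dm_pad : \rank (Dm Sp) = #|S|.
Proof.
have := rank_pad 1; rewrite !mulmx1 PPt mxrank1 DmM setIid => ->.
by [].
Qed.

End Padding.
Definition Bm n (A : 'M['F_2]_n) (S : {set 'I_n}) := Dm S *m A *m Dm S.

Lemma rank_Dm n (S : {set 'I_n}) : \rank (Dm S) = #|S|.
Proof.
have := @rank_Dm_pad _ n id id (fun _ => erefl) (@inj_id _) S.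
have -> : Sp id S = S by apply/setP=> i; rewrite inE.
by [].
Qed.

Lemma ker_vec n (A : 'M['F_2]_n) S : (\rank (Bm A S) < #|S|)%N ->
  exists x : 'rV_n, [/\ x != 0, x *m Dm S = x & x *m Bm A S = 0].
Proof.
move=> Hr; set B := Bm A S; set K := (kermx B :&: Dm S)%MS.
have HK : (0 < \rank K)%N.
  have := mxrank_sum_cap (kermx B) (Dm S); rewrite mxrank_ker rank_Dm.
  have := rank_leq_col (kermx B + Dm S)%MS.
  have := rank_leq_row B.
  move: Hr; rewrite -/B /K; lia.
have : K != 0 by rewrite -mxrank_eq0 -lt0n.
case: (pickP (fun i => row i K != 0)) => [i Hi _|H0]; last first.
  case/eqP; apply/row_matrixP=> i; rewrite row0; apply/eqP.
  by have := H0 i; move/negbFE.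
exists (row i K); split=> //.
  have := row_sub i K; rewrite sub_capmx => /andP [_ /submxP [y ->]].
  by rewrite -mulmxA DmM setIid.
by apply/sub_kermxP; have := row_sub i K; rewrite sub_capmx => /andP [].
Qed.

Lemma rank_del n (B : 'M['F_2]_n) (x : 'rV_n) v : B^T = B -> x *m B = 0 ->
  x 0 v = 1 -> (\rank B <= \rank (Dm [set~ v] *m B *m Dm [set~ v]))%N.
Proof.
move=> HB Hx Hv; set P := Dm [set~ v]; set L := 1 - delta_mx v 0 *m x.
have HxP : x *m P = x - delta_mx 0 v.
  apply/matrixP=> i j; rewrite DmMr !mxE !inE (ord1 i) eqxx /=.
  by case: eqP => [->|_]; rewrite ?Hv ?subrr ?subr0.
have HPd : P + delta_mx v v = 1.
  apply/matrixP=> i j; rewrite mxE DmE !mxE !inE.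
  case: (eqVneq i j) => [Eij|Hij].
    by rewrite -Eij; case: (eqVneq i v) => [Eiv|Hiv]; rewrite /= ?addr0 ?add0r.
  case: (eqVneq i v) => [Eiv|Hiv]; last by rewrite /= addr0.
  by rewrite -Eiv eq_sym (negbTE Hij) /= addr0.
have H1 : L *m P *m B = B.
  rewrite mulmxBl mul1mx mulmxBl -!mulmxA (mulmxA x P) HxP mulmxBl Hx sub0r.
  rewrite mulmxN mulmxA mul_delta_mx opprK -mulmxDl HPd mul1mx //.
have HPt : P^T = P by rewrite /P Dm_tr.
have H2 : B = B *m P *m L^T.
  by rewrite -{1}HB -{1}H1 !trmx_mul HB HPt mulmxA.
have H3 : B *m P = L *m (P *m B *m P) by rewrite !mulmxA H1.
rewrite (leq_trans (_ : _ <= \rank (B *m P))%N) //.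
  by rewrite {1}H2 mxrankM_maxl.
by rewrite H3 mxrankM_maxr.
Qed.

Lemma Bm_tr n (A : 'M['F_2]_n) S : A^T = A -> (Bm A S)^T = Bm A S.
Proof. by move=> HA; rewrite /Bm !trmx_mul Dm_tr HA mulmxA. Qed.

Lemma Bm_restr n (A : 'M['F_2]_n) S S' :
  Dm S' *m Bm A S *m Dm S' = Bm A (S' :&: S).
Proof.
rewrite /Bm !mulmxA DmM -(mulmxA _ (Dm S)) DmM (setIC S S') //.
Qed.

Lemma rank_Bm_le n (A : 'M['F_2]_n) S : (\rank (Bm A S) <= #|S|)%N.
Proof. by rewrite -(rank_Dm S) mxrankM_maxr. Qed.

Lemma rank_restr_le n (A : 'M['F_2]_n) S S' :
  (\rank (Bm A (S' :&: S)) <= \rank (Bm A S))%N.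
Proof. by rewrite -Bm_restr (leq_trans (mxrankM_maxl _ _)) // mxrankM_maxr. Qed.

Lemma setC1I n (S : {set 'I_n}) v : [set~ v] :&: S = S :\ v.
Proof. by apply/setP=> i; rewrite !inE andbC. Qed.

Lemma rv_neq0 n (x : 'rV['F_2]_n) : x != 0 -> exists v, x 0 v = 1.
Proof.
move=> Hx; case: (pickP (fun v => x 0 v != 0)) => [v Hv|H0].
  by exists v; apply: F2_neq0.
case/eqP: Hx; apply/matrixP=> i j; rewrite (ord1 i) mxE.
by have := H0 j => /negbFE/eqP.
Qed.

Lemma supp_in n (S : {set 'I_n}) (x : 'rV['F_2]_n) v :
  x *m Dm S = x -> x 0 v = 1 -> v \in S.
Proof.
move=> HxD Hv; have := congr1 (fun M : 'M_(1, n) => M 0 v) HxD; rewrite /= DmMr Hv.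
by case: (v \in S) => //= /eqP; rewrite eq_sym oner_eq0.
Qed.

Lemma del_rank n (A : 'M['F_2]_n) S (x : 'rV_n) v : A^T = A ->
  x *m Dm S = x -> x *m Bm A S = 0 -> x 0 v = 1 ->
  v \in S /\ \rank (Bm A (S :\ v)) = \rank (Bm A S).
Proof.
move=> HA HxD HxB Hv; split; first exact: supp_in HxD Hv.
apply/eqP; rewrite eqn_leq -{1}setC1I rank_restr_le /=.
by rewrite -setC1I -Bm_restr (rank_del (Bm_tr S HA) HxB Hv).
Qed.

Lemma stepA n (A : 'M['F_2]_n) S : A^T = A -> (\rank (Bm A S) < #|S|)%N ->
  exists2 v, v \in S & \rank (Bm A (S :\ v)) = \rank (Bm A S).
Proof.
move=> HA Hr; have [x [Hx0 HxD HxB]] := ker_vec Hr.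
have [v Hv] := rv_neq0 Hx0.
by have [H1 H2] := del_rank HA HxD HxB Hv; exists v.
Qed.

Lemma ker_free n (A : 'M['F_2]_n) S (x : 'rV_n) : A^T = A ->
  \rank (Bm A S) = #|S| -> x *m Dm S = x -> x *m Bm A S = 0 -> x = 0.
Proof.
move=> HA Hr HxD HxB; apply/eqP; apply/negPn/negP => Hx0.
have [v Hv] := rv_neq0 Hx0.
have [HvS H2] := del_rank HA HxD HxB Hv.
have := rank_Bm_le A (S :\ v); rewrite H2 Hr (cardsD1 v S) HvS.
by rewrite add1n ltnn.
Qed.

Lemma quadF2 n (A : 'M['F_2]_n) (y : 'rV_n) : A^T = A -> (forall i, A i i = 1) ->
  \sum_k (\sum_i y 0 i * A i k) * y 0 k = \sum_i y 0 i.
Proof.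
move=> HA Hd.
pose g (i k : 'I_n) := y 0 i * A i k * y 0 k.
pose h (i k : 'I_n) := if (i < k)%N then g i k else 0.
have Hg : forall i k, g i k = h i k + h k i + (if i == k then g i i else 0).
  move=> i k; rewrite /h; case: (ltngtP i k) => Hik.
  - by rewrite -val_eqE /= (ltn_eqF Hik) !addr0.
  - rewrite add0r -val_eqE /= (gtn_eqF Hik) addr0 /g.
    have -> : A i k = A k i by rewrite -{1}HA mxE.
    ring.
  - have Eik : i = k by apply: val_inj.
    by rewrite Eik eqxx !add0r.
rewrite (eq_bigr (fun k => \sum_i g i k)); last first.
  by move=> k _; rewrite mulr_suml.
rewrite (eq_bigr (fun k => \sum_i (h i k + h k i + (if i == k then g i i else 0)))); last first.
  by move=> k _; apply: eq_bigr => i _; rewrite Hg.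
under eq_bigr => k _ do rewrite !big_split /=.
rewrite !big_split /= [X in _ + X + _]exchange_big /= F2_add_self add0r.
apply: eq_bigr => k _; rewrite (bigD1 k) //= big1 ?addr0 ?eqxx.
  by rewrite /g Hd mulr1 F2_mul_self.
by move=> i /negbTE ->.
Qed.

Lemma stepB n (A : 'M['F_2]_n) S : A^T = A -> (forall i, A i i = 1) ->
  S != set0 -> \rank (Bm A S) = #|S| ->
  exists2 v, v \in S & \rank (Bm A (S :\ v)) = (#|S| - 1)%N.
Proof.
move=> HA Hd HS Hr.
case: (pickP (fun v => (v \in S) && (\rank (Bm A (S :\ v)) == (#|S| - 1)%N)))
  => [v /andP [Hv /eqP E]|H0]; first by exists v.
have HX : forall v, exists x : 'rV['F_2]_n, v \in S ->
    [/\ x *m Dm S = x, x 0 v = 0 & x *m Bm A S = delta_mx 0 v].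
  move=> v; case: (boolP (v \in S)) => Hv; last by exists 0.
  have Hc : #|S :\ v| = (#|S| - 1)%N by rewrite [in RHS](cardsD1 v S) Hv add1n subn1.
  have Hlt : (\rank (Bm A (S :\ v)) < #|S :\ v|)%N.
    rewrite ltn_neqAle rank_Bm_le andbT Hc.
    by move: (H0 v); rewrite Hv /= => ->.
  have [x [Hx0 HxD HxB]] := ker_vec Hlt.
  exists x => _.
  have HxDS : x *m Dm S = x.
    rewrite -HxD -mulmxA DmM; congr (_ *m Dm _); apply/setP => i; rewrite !inE.
    by case: (i \in S); rewrite ?andbT ?andbF.
  have Hxv : x 0 v = 0 by rewrite -HxD DmMr !inE eqxx.
  have E1 : x *m Bm A S = x *m A *m Dm S by rewrite /Bm !mulmxA HxDS.
  have E2 : x *m A *m Dm (S :\ v) = 0 by rewrite -HxB /Bm !mulmxA HxD.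
  have Hoff : forall j, j != v -> (x *m A *m Dm S) 0 j = 0.
    move=> j Hj; have := congr1 (fun M : 'M_(1, n) => M 0 j) E2.
    by rewrite /= !DmMr !inE Hj /= => ->; rewrite mxE.
  have Hyv : (x *m A) 0 v = 1.
    apply: F2_neq0; apply/negP => /eqP Hz.
    have Hx : x *m Bm A S = 0.
      apply/matrixP=> i j; rewrite E1 (ord1 i) [RHS]mxE.
      case: (eqVneq j v) => [->|Hj]; last exact: Hoff.
      by rewrite DmMr Hz; case: (v \in S).
    by move/eqP: Hx0; apply; apply: (ker_free HA Hr HxDS Hx).
  split=> //; apply/matrixP=> i j; rewrite E1 (ord1 i) [RHS]mxE eqxx /=.
  case: (eqVneq j v) => [->|Hj]; last by rewrite Hoff.
  by rewrite DmMr Hv Hyv.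
have [X HXP] := fin_all_exists HX.
have [Y rowY] : exists Y : 'M['F_2]_n, forall v, row v Y = if v \in S then X v else 0.
  by exists (\matrix_v (if v \in S then X v else 0)) => v; rewrite rowK.
have YB : Y *m Bm A S = Dm S.
  apply/row_matrixP => v; rewrite row_mul rowY.
  case: (boolP (v \in S)) => Hv.
    have [_ _ ->] := HXP v Hv.
    apply/matrixP=> i j; rewrite (ord1 i) mxE [RHS]mxE DmE Hv /=.
    by rewrite [j == v]eq_sym; case: (v == j).
  apply: (etrans (mul0mx _ _)); apply/rowP=> j.
  by rewrite [RHS]mxE DmE (negbTE Hv) mxE.
have YD : Y *m Dm S = Y.
  apply/row_matrixP => v; rewrite row_mul rowY.
  case: (boolP (v \in S)) => Hv; last first.
    by apply/matrixP=> i j; rewrite DmMr !mxE; case: (j \in S).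
  by have [-> _ _] := HXP v Hv.
have Ydiag : forall v, Y v v = 0.
  move=> v; have := congr1 (fun M : 'M_(1, n) => M 0 v) (rowY v); rewrite /= mxE => ->.
  case: (boolP (v \in S)) => Hv; last by rewrite mxE.
  by have [_ -> _] := HXP v Hv.
have HBt : (Bm A S)^T = Bm A S := Bm_tr S HA.
have HDt : (Dm S)^T = Dm S := Dm_tr S.
have DBY : Dm S = Bm A S *m Y^T by rewrite -{1}HDt -YB trmx_mul HBt.
have EY : Y = Y *m Bm A S *m Y^T by rewrite -mulmxA -DBY YD.
have Ysym : Y^T = Y.
  by rewrite {1}EY trmx_mul trmxK trmx_mul HBt mulmxA -EY.
have YtD : Y^T = Dm S *m Y^T by rewrite -{1}YD trmx_mul HDt.
have YAY : Y *m A *m Y^T = Y.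
  have -> : Y *m A *m Y^T = (Y *m Dm S) *m A *m (Dm S *m Y^T) by rewrite YD -YtD.
  by rewrite [RHS]EY /Bm !mulmxA.
have rowsum : forall j, \sum_i Y j i = 0.
  move=> j; have <- : (Y *m A *m Y^T) j j = \sum_i Y j i.
    rewrite (eq_bigr (fun i => row j Y 0 i)); last by move=> i _; rewrite [RHS]mxE.
    rewrite -(quadF2 (row j Y) HA Hd) mxE; apply: eq_bigr => k _.
    rewrite mxE [Y^T k j]mxE mxE; congr (_ * _).
    by apply: eq_bigr => i _; rewrite mxE.
  by rewrite YAY Ydiag.
case/set0Pn: HS => s Hs.
pose ones : 'cV['F_2]_n := const_mx 1.
have Y1 : Y *m ones = 0.
  apply/matrixP => i j; rewrite !mxE -[RHS](rowsum i).
  by apply: eq_bigr => k _; rewrite mxE mulr1.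
have : Dm S *m ones = 0 by rewrite DBY Ysym -mulmxA Y1 mulmx0.
move/matrixP => /(_ s 0); rewrite DmMl Hs !mxE => /eqP.
by rewrite oner_eq0.
Qed.

Section Graph.
Variables (T : finType) (e : rel T).
Hypothesis He : simple_graph e.

Definition Afull : 'M['F_2]_#|T| :=
  \matrix_(i, j) (if (i == j) || e (enum_val i) (enum_val j) then 1 else 0).

Lemma Afull_tr : Afull^T = Afull.
Proof.
case: He => Hsym _.
apply/matrixP=> i j; rewrite !mxE eq_sym Hsym //.
Qed.

Lemma Afull_diag i : Afull i i = 1.
Proof. by rewrite mxE eqxx. Qed.

Let gK := @enum_rankK T.
Let g_inj := @enum_val_inj T T.

Lemma closed_pad (S : {set T}) :
  closed_adj e S = Pm (@enum_val T T) S *m Afull *m (Pm (@enum_val T T) S)^T.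
Proof.
apply/matrixP=> k l; rewrite [LHS]mxE [RHS]mxE.
rewrite (eq_bigr (fun j => Pm (@enum_val T T) S l j * Afull (enum_rank (enum_val k)) j)); last first.
  move=> j _; rewrite [((Pm _ _)^T) _ _]mxE mulrC; congr (_ * _).
  by rewrite [LHS]mxE (sumP gK g_inj).
rewrite (sumP gK g_inj) mxE !enum_rankK (inj_eq (@enum_rank_inj T)).
by rewrite (inj_eq enum_val_inj).
Qed.

Definition rk (S : {set T}) := \rank (Bm Afull (Sp (@enum_val T T) S)).

Lemma card_Sp (S : {set T}) : #|Sp (@enum_val T T) S| = #|S|.
Proof. by rewrite -rank_Dm (rank_Dm_pad gK g_inj). Qed.

Lemma nullityE (S : {set T}) : nullity e S = (#|S| - rk S)%N.
Proof.
by rewrite /nullity mxrank_ker closed_pad (rank_pad gK g_inj).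
Qed.

Lemma rk_le (S : {set T}) : (rk S <= #|S|)%N.
Proof. by rewrite /rk -card_Sp rank_Bm_le. Qed.

Lemma Sp_del (S : {set T}) t : Sp (@enum_val T T) (S :\ t) = Sp (@enum_val T T) S :\ enum_rank t.
Proof.
apply/setP=> i; rewrite !inE; congr (_ && _).
by rewrite -(inj_eq enum_val_inj) enum_rankK.
Qed.

Lemma step (S : {set T}) : S != set0 ->
  exists2 t, t \in S & nullity e (S :\ t) = (nullity e S - 1)%N.
Proof.
move=> HS.
have := rk_le S; rewrite leq_eqVlt => /orP [/eqP Hr|Hr].
  have HS' : Sp (@enum_val T T) S != set0.
    case/set0Pn: HS => t Ht; apply/set0Pn; exists (enum_rank t).
    by rewrite inE enum_rankK.
  have [v Hv Hrk] := stepB Afull_tr Afull_diag HS' (etrans Hr (esym (card_Sp S))).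
  exists (enum_val v); first by move: Hv; rewrite inE.
  rewrite !nullityE /rk Sp_del enum_valK Hrk card_Sp -/(rk S) Hr.
  have := cardsD1 (enum_val v) S; move: Hv; rewrite inE => -> /=.
  lia.
rewrite -card_Sp in Hr.
have [v Hv Hrk] := stepA Afull_tr Hr.
exists (enum_val v); first by move: Hv; rewrite inE.
rewrite !nullityE /rk Sp_del enum_valK Hrk -/(rk S).
have := cardsD1 (enum_val v) S; move: Hv; rewrite inE => -> /=.
have := rk_le S; rewrite card_Sp in Hr.
lia.
Qed.

Definition remS (S : {set T}) (s : seq T) k := [set x in S | x \notin take k s].

Lemma remS0 S s : remS S s 0 = S.
Proof. by apply/setP=> x; rewrite !inE take0 in_nil andbT. Qed.

Lemma remSS S t s k : remS S (t :: s) k.+1 = remS (S :\ t) s k.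
Proof. apply/setP=> x; rewrite /remS take_cons !inE negb_or. by case: (x \in S); case: (x == t). Qed.

Lemma main_ind m : forall S : {set T}, #|S| = m ->
  exists s : seq T, [/\ uniq s, {subset s <= S}, size s = #|S| &
    forall k, (k <= #|S|)%N -> nullity e (remS S s k) = (nullity e S - k)%N].
Proof.
elim: m => [|m IH] S HSm.
  exists [::]; split; [by [] | by [] | by rewrite HSm | ].
  by move=> k; rewrite HSm leqn0 => /eqP ->; rewrite remS0 subn0.
have HS : S != set0 by apply/set0Pn; apply/card_gt0P; rewrite HSm.
have [t Ht Hnul] := step HS.
have Hc := cardsD1 t S; rewrite Ht /= in Hc.
have [s [Hu Hsub Hsize Hk]] := IH (S :\ t) (ltac:(lia)).
exists (t :: s); split.
- rewrite /= Hu andbT; apply/negP => /Hsub; by rewrite !inE eqxx.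
- move=> x; rewrite in_cons => /orP [/eqP ->|/Hsub] //; by rewrite !inE => /andP [].
- by rewrite /= Hsize Hc.
case=> [|k] Hk'; first by rewrite remS0 subn0.
rewrite remSS Hk; last by move: Hk'; rewrite Hc.
by rewrite Hnul; lia.
Qed.

End Graph.

Theorem theorem2p8 (T : finType) (e : rel T) :
  simple_graph e ->
  exists s : seq T,
    [/\ uniq s, size s = #|T|,
        (forall k, (k <= #|T|)%N -> (k < nullity e [set: T])%N ->
           nullity e (remaining s k) = (nullity e [set: T] - k)%N)
      & (forall k, (k <= #|T|)%N -> (nullity e [set: T] <= k)%N ->
           nullity e (remaining s k) = 0%N)].
Proof.
move=> He.
have [s [Hu _ Hsize Hk]] := main_ind He (erefl #|[set: T]|).
have Hrem : forall k, remaining s k = remS [set: T] s k.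
  by move=> k; apply/setP=> x; rewrite !inE.
exists s; split=> //.
- by rewrite Hsize cardsT.
- by move=> k Hk1 _; rewrite Hrem Hk // cardsT.
move=> k Hk1 Hk2; rewrite Hrem Hk ?cardsT //.
by apply/eqP; rewrite subn_eq0.
Qed.
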